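(* Let $D$ be a $3$-dicritical digraph, let $T$ be a subdigraph of $D$ that is a tournament, and let $S$ be a set of vertices of $T$ inducing a transitive tournament in $T$, with acyclic ordering $v_1,\dots,v_s$. Then for every $x\in V(T)\setminus S$ there is an increasing sequence of intervals $(I_1,I_2,I_3,I_4)$ of $S$ with $I_1\cup I_2\cup I_3\cup I_4=S$ such that, in $T$, $x$ dominates $I_1\cup I_3$ and $x$ is dominated by $I_2\cup I_4$.
   Context: A $2$-dicolouring is a map to $\{1,2\}$ whose colour classes induce acyclic subdigraphs. $D$ is $3$-dicritical if $D$ has no $2$-dicolouring but every proper subdigraph has one. A tournament has exactly one arc between any two distinct vertices; it is transitive if acyclic, and then its acyclic ordering $v_1,\dots,v_s$ is the unique ordering with every arc $v_iv_j$ satisfying $i<j$. An interval of $S$ is a set $\{v_i,\dots,v_j\}$ for $i,j\in[s]$ (possibly empty). An interval $\{v_{i_0},\dots,v_{j_0}\}$ is smaller than $\{v_{i_1},\dots,v_{j_1}\}$ if $j_0<i_1$; by convention the empty interval is both smaller and greater than every interval. A sequence $P_1,\dots,P_t$ of intervals is increasing if $P_i$ is smaller than $P_j$ whenever $i<j$. A vertex $x$ dominates a set $Y$ (and $Y$ is dominated by $x$) if $xy$ is an arc for every $y\in Y$. *)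

(* Defs.v *)
From mathcomp Require Import all_boot.
Set Implicit Arguments. Unset Strict Implicit. Unset Printing Implicit Defensive.

Section Digraphs.
Variable V : finType.

Definition acyclic_on (Y : {set V}) (B : rel V) : Prop :=
  forall p : seq V, p != [::] -> all (fun v => v \in Y) p -> ~~ cycle B p.

Definition subdigraph (A : rel V) (X : {set V}) (B : rel V) : Prop :=
  forall x y, B x y -> [&& x \in X, y \in X & A x y].

Definition proper_subdigraph (A : rel V) (X : {set V}) (B : rel V) : Prop :=
  subdigraph A X B /\ (X != setT \/ exists x y, A x y && ~~ B x y).

Definition dicolouring2 (X : {set V}) (B : rel V) (c : V -> bool) : Prop :=
  forall b : bool, acyclic_on [set v in X | c v == b] B.

Definition dicolourable2 (X : {set V}) (B : rel V) : Prop :=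
  exists c : V -> bool, dicolouring2 X B c.

Definition dicritical3 (A : rel V) : Prop :=
  [/\ irreflexive A, ~ dicolourable2 setT A &
      forall X B, proper_subdigraph A X B -> dicolourable2 X B].

Definition is_tournament (X : {set V}) (B : rel V) : Prop :=
  (forall x y, B x y -> (x \in X) && (y \in X)) /\ irreflexive B /\
  forall x y, x \in X -> y \in X -> x != y -> (B x y) (+) (B y x).

(* s lists a set S of vertices of T = (X, B) that induces a transitive
   tournament, and s is its acyclic ordering (every arc goes forward). *)
Definition transitive_ordering (X : {set V}) (B : rel V) (s : seq V) : Prop :=
  [/\ uniq s, {subset s <= X}, acyclic_on [set v in s] B &
      forall y z, y \in s -> z \in s -> B y z -> index y s < index z s].

(* Intervals of S w.r.t. the ordering s (0-based indices; empty if i > j). *)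
Definition is_interval (s : seq V) (I : {set V}) : Prop :=
  exists i j : nat, I = [set v in s | i <= index v s <= j].

(* I smaller than J (empty interval is smaller and greater than all). *)
Definition smaller (s : seq V) (I J : {set V}) : bool :=
  [|| I == set0, J == set0 |
      [forall y in I, forall z in J, index y s < index z s]].

Definition increasing_intervals (s : seq V) (P : seq {set V}) : Prop :=
  (forall I, I \in P -> is_interval s I) /\
  forall i j, i < j -> j < size P -> smaller s (nth set0 P i) (nth set0 P j).

End Digraphs.

(* Main.v *)
Require Import Defs.
From mathcomp Require Import all_boot.
From mathcomp Require Import zify.
Set Implicit Arguments. Unset Strict Implicit. Unset Printing Implicit Defensive.

Fixpoint ex (V : eqType) (a d v : V) (x : V) (s : seq V) : seq V :=
  match s with
  | [::] => [::]
  | y :: s' => (if (x == a) && (y == d) then [:: v; y] else [:: y]) ++ ex a d v y s'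
  end.

Lemma ex_path (V : eqType) (R R' : rel V) a d v :
  (forall u w, R u w -> R' u w \/ (u == a) && (w == d)) -> R' a v -> R' v d ->
  forall s x, path R x s -> path R' x (ex a d v x s).
Proof.
move=> HR Hav Hvd; elim=> [|y s IH] x //= /andP[Rxy Ps].
rewrite cat_path; case: ifP => [/andP[/eqP ? /eqP ?]|Hn] /=.
  by subst; rewrite Hav Hvd /=; apply: IH.
case: (HR _ _ Rxy) => [-> | Hc]; last by rewrite Hc in Hn.
by rewrite /=; apply: IH.
Qed.

Lemma ex_last (V : eqType) a d (v : V) : forall s x, last x (ex a d v x s) = last x s.
Proof.
elim=> [|y s IH] x //=; rewrite last_cat; case: ifP => _ /=; exact: IH.
Qed.

Lemma ex_all (V : eqType) a d (v : V) (Y : pred V) :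
  (Y a -> Y v) -> forall s x, Y x -> all Y s -> all Y (ex a d v x s).
Proof.
move=> Hv; elim=> [|y s IH] x //= Yx /andP[Yy Ys].
rewrite all_cat; case: ifP => [/andP[/eqP Ha _]|_] /=.
  by rewrite /= Yy Hv ?IH // -Ha.
by rewrite Yy IH.
Qed.

Lemma surgery (V : eqType) (R R' : rel V) a d v (Y : pred V) p :
  (forall u w, R u w -> R' u w \/ (u == a) && (w == d)) -> R' a v -> R' v d ->
  (Y a -> Y v) -> p != [::] -> all Y p -> cycle R p ->
  exists q, [/\ q != [::], all Y q & cycle R' q].
Proof.
move=> HR Hav Hvd Hv; case: p => [|x0 p'] // _ /= /andP[Y0 Yp] Pc.
have P' := ex_path HR Hav Hvd Pc.
have L := ex_last a d v (rcons p' x0) x0; rewrite last_rcons in L.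
have A' : all Y (ex a d v x0 (rcons p' x0)).
  by apply: ex_all => //; rewrite all_rcons Y0.
have NE : ex a d v x0 (rcons p' x0) != [::].
  by case: (p') => [|? ?] /=; case: ifP.
move: NE P' L A'; case: (lastP (ex a d v x0 (rcons p' x0))) => [|t z] // _.
move=> Pt; rewrite last_rcons => Ez; rewrite all_rcons => /andP[_ Yt].
exists (x0 :: t); split => //=; last by move: Pt; rewrite Ez.
by rewrite Yt andbT.
Qed.

Lemma no_config (V : finType) (A B : rel V) (X : {set V}) a x b c d :
  dicritical3 A -> subdigraph A X B ->
  B a x -> B x b -> B b c -> B c x -> B x d -> B a d ->
  B a b -> B a c -> B b d -> B c d -> a != x -> a != b -> a != c -> d != x -> d != b -> d != c -> False.
Proof.
case=> _ Hnc Hcrit HsB Bax Bxb Bbc Bcx Bxd Bad Bab Bac Bbd Bcd nax nab nac ndx ndb ndc.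
have AB u w : B u w -> A u w by move/HsB => /and3P[].
pose A' := [rel u w | A u w && ((u,w) != (a,d))].
have A'E u w : B u w -> (u != a) || (w != d) -> A' u w.
  move=> Buw H; rewrite /= AB //= xpair_eqE negb_and; exact: H.
have [phi Hphi] : dicolourable2 setT A'.
  apply: Hcrit; split.
    by move=> u w /andP[Huw _]; rewrite !inE Huw.
  by right; exists a, d; rewrite /= AB // eqxx.
have [v [Hav Hvd Hv]] : exists v, [/\ A' a v, A' v d & phi v = phi a].
  case Ex: (phi x == phi a).
    exists x; split; [apply: A'E => //; by rewrite (eq_sym x d) ndx orbT|
                      apply: A'E => //; by rewrite eq_sym nax | exact/eqP].
  case Eb: (phi b == phi a).
    exists b; split; [apply: A'E => //; by rewrite (eq_sym b d) ndb orbT|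
                      apply: A'E => //; by rewrite eq_sym nab | exact/eqP].
  case Ec: (phi c == phi a).
    exists c; split; [apply: A'E => //; by rewrite (eq_sym c d) ndc orbT|
                      apply: A'E => //; by rewrite eq_sym nac | exact/eqP].
  exfalso; have := Hphi (~~ phi a) [:: x; b; c] isT.
  have -> : all (fun u => u \in [set u0 in setT | phi u0 == ~~ phi a]) [:: x; b; c].
    by rewrite /= !inE; move: Ex Eb Ec; case: (phi a) (phi x) (phi b) (phi c) => [] [] [] [].
  move=> H; move: (H isT) => /negP; apply; apply/and4P; split => //; apply: A'E => //;
    by rewrite eq_sym ?nax ?nab ?nac.
apply: Hnc; exists phi => k p pne pall; apply/negP => pcyc.
have HR : forall u w, A u w -> A' u w \/ (u == a) && (w == d).
  move=> u w Auw; case E: ((u, w) == (a, d)).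
    by right; move: E; rewrite xpair_eqE.
  by left; rewrite /= Auw E.
have HY : a \in [set u0 in setT | phi u0 == k] -> v \in [set u0 in setT | phi u0 == k].
  by rewrite !inE Hv.
have [q [qne qall qcyc]] := surgery
  (Y := fun u => u \in [set u0 in setT | phi u0 == k]) HR Hav Hvd HY pne pall pcyc.
by move: (Hphi k q qne qall); rewrite qcyc.
Qed.

Lemma firstP (P : pred nat) m n : m <= n ->
  [/\ m <= m + find P (iota m (n - m)) <= n,
      forall i, m <= i < m + find P (iota m (n - m)) -> ~~ P i &
      m + find P (iota m (n - m)) < n -> P (m + find P (iota m (n - m)))].
Proof.
move=> mn; have fs := find_size P (iota m (n - m)); rewrite size_iota in fs.
split.
- lia.
- move=> i /andP[mi hi].
  have hi' : i - m < find P (iota m (n - m)) by rewrite ltn_subLR.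
  have := before_find 0 hi'; rewrite nth_iota; last exact: leq_trans hi' fs.
  have -> : m + (i - m) = i by lia.
  by move=> ->.
- move=> h; have hf : find P (iota m (n - m)) < n - m by rewrite ltn_subRL.
  have := nth_find 0 (_ : has P (iota m (n - m))); rewrite nth_iota //.
  by apply; rewrite has_find size_iota.
Qed.

Definition Iv (V : finType) (s : seq V) p q := [set v in s | p <= index v s < q].

Lemma Iv_int (V : finType) (s : seq V) p q : is_interval s (Iv s p q).
Proof.
case: q => [|q].
  exists 1, 0; apply/setP => v; rewrite !inE.
  by case: (index v s) => [|k]; rewrite ?andbF //= ltn0 !andbF.
by exists p, q; apply/setP => v; rewrite !inE.
Qed.

Lemma Iv_sm (V : finType) (s : seq V) p q p' q' :
  q <= p' -> smaller s (Iv s p q) (Iv s p' q').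
Proof.
move=> h; apply/orP; right; apply/orP; right.
apply/forall_inP => y; rewrite inE => /andP[_ /andP[_ hy]].
apply/forall_inP => z; rewrite inE => /andP[_ /andP[hz _]].
exact: leq_trans hy (leq_trans h hz).
Qed.

Theorem lemma16 (V : finType) (A : rel V) (X : {set V}) (B : rel V)
    (s : seq V) (x : V) :
  dicritical3 A -> subdigraph A X B -> is_tournament X B ->
  transitive_ordering X B s -> x \in X -> x \notin s ->
  exists I1 I2 I3 I4 : {set V},
    [/\ increasing_intervals s [:: I1; I2; I3; I4],
        I1 :|: I2 :|: I3 :|: I4 = [set v in s],
        {in I1 :|: I3, forall y, B x y} &
        {in I2 :|: I4, forall y, B y x}].
Proof.
move=> Hd HsB [HX [Hirr Htour]] [Hu Hsub _ Hord] xX xs.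
pose n := size s.
pose sn i := nth x s i.
have Hin i : i < n -> sn i \in s by move=> h; exact: mem_nth.
have Hne i : i < n -> sn i != x.
  by move=> h; apply/eqP => E; move: xs; rewrite -E Hin.
have Hneq i j : i < n -> j < n -> (sn i == sn j) = (i == j).
  by move=> hi hj; rewrite nth_uniq.
have HBi i j : i < j -> j < n -> B (sn i) (sn j).
  move=> ij jn; have iN : i < n by exact: ltn_trans ij jn.
  have := Htour (sn i) (sn j) (Hsub _ (Hin _ iN)) (Hsub _ (Hin _ jn)).
  rewrite Hneq // (ltn_eqF ij) => /(_ isT).
  case E: (B (sn j) (sn i)); last by rewrite addbF.
  have := Hord _ _ (Hin _ jn) (Hin _ iN) E.
  by rewrite !index_uniq // ltnNge (ltnW ij).
pose O i := B x (sn i).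
have Hdir i : i < n -> ~~ O i -> B (sn i) x.
  move=> h nO; have := Htour x (sn i) xX (Hsub _ (Hin _ h)).
  by move: nO; rewrite /O eq_sym Hne // => /negbTE -> /(_ isT).
have forb i1 i2 i3 i4 : i1 < i2 -> i2 < i3 -> i3 < i4 -> i4 < n ->
    ~~ O i1 -> O i2 -> ~~ O i3 -> O i4 -> False.
  move=> h12 h23 h34 h4 o1 o2 o3 o4.
  have h3 : i3 < n by lia.
  have h2 : i2 < n by lia.
  have h1 : i1 < n by lia.
  apply: (no_config (X := X) (a := sn i1) (x := x) (b := sn i2) (c := sn i3) (d := sn i4) Hd HsB).
  all: try exact: Hdir.
  all: try assumption.
  all: try (apply: HBi; lia).
  all: try (rewrite ?Hne // ?Hneq //; lia).
  all: try (rewrite eq_sym Hne //).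
  all: try (rewrite Hneq //; lia).
pose nO := fun i => ~~ O i.
have [/andP[_ p1n] bef1 at1] := firstP nO (leq0n n).
set p1 := 0 + find nO (iota 0 (n - 0)) in p1n bef1 at1.
have [/andP[p12 p2n] bef2 at2] := firstP O p1n.
set p2 := p1 + find O (iota p1 (n - p1)) in p12 p2n bef2 at2.
have [/andP[p23 p3n] bef3 at3] := firstP nO p2n.
set p3 := p2 + find nO (iota p2 (n - p2)) in p23 p3n bef3 at3.
have tail i : p3 <= i < n -> ~~ O i.
  move=> /andP[h3 hn]; apply/negP => Oi.
  have o3 : ~~ O p3 by apply: at3; lia.
  have o2 : O p2 by apply: at2; lia.
  have o1 : ~~ O p1 by apply: at1; lia.
  have l12 : p1 < p2.
    by rewrite ltn_neqAle p12 andbT; apply/eqP => E; move: o1; rewrite E o2.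
  have l23 : p2 < p3.
    by rewrite ltn_neqAle p23 andbT; apply/eqP => E; move: o3; rewrite -E o2.
  have l3i : p3 < i.
    by rewrite ltn_neqAle h3 andbT; apply/eqP => E; move: o3; rewrite E Oi.
  exact: (forb p1 p2 p3 i).
have memI p q v : v \in Iv s p q -> [/\ v \in s, index v s < n, sn (index v s) = v &
                                       p <= index v s < q].
  rewrite inE => /andP[vs h]; split => //; first by rewrite index_mem.
  exact: nth_index.
exists (Iv s 0 p1), (Iv s p1 p2), (Iv s p2 p3), (Iv s p3 n); split.
- split.
    by move=> I; rewrite !inE => /or4P[] /eqP ->; apply: Iv_int.
  move=> i j ij; case: j ij => [|[|[|[|j]]]] //; case: i => [|[|[|i]]] //= _ _;
    apply: Iv_sm; lia.
- apply/setP => v; rewrite !inE; case vs: (v \in s) => //=.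
  have : index v s < n by rewrite index_mem.
  lia.
- move=> y /setUP[] /memI[_ yn E /andP[h1 h2]]; rewrite -E.
    by apply/negPn; apply: bef1; lia.
  by apply/negPn; apply: bef3; lia.
- move=> y /setUP[] /memI[_ yn E /andP[h1 h2]]; rewrite -E.
    by apply: Hdir => //; apply: bef2; lia.
  by apply: Hdir => //; apply: tail; lia.
Qed.
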